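(* Let $A$ be a finite set of options (with at least two elements) and let $v=(v_{xy})$ be a Llull matrix on $A$. Let $v^*$ be the associated path scores, $\succeq$ the ranking relation and $T$ the set of path-top choices (as defined in the context). Then $T$ is the unique minimal dominant set for $v^*$; that is, $T$ is a dominant set for $v^*$, no proper subset of $T$ is a dominant set for $v^*$, and every minimal dominant set for $v^*$ equals $T$.
   Context: A Llull matrix on a finite set $A$ is a family of real numbers $v_{xy}\in[0,1]$, indexed by ordered pairs $(x,y)$ of distinct elements of $A$, with $v_{xy}+v_{yx}\le 1$. The path scores are defined by $v^*_{xy}=\max \min(v_{x_0x_1},v_{x_1x_2},\dots,v_{x_{m-1}x_m})$, where the maximum runs over all paths $x_0x_1\dots x_m$ with $m\ge1$, $x_0=x$, $x_m=y$ and the $x_i$ pairwise distinct. The ranking relation $\succeq$ is the transitive closure of the relation $\{(x,y): x\ne y,\ v^*_{xy}\ge v^*_{yx}\}$; i.e. $x\succeq y$ iff there is a path $x_0\dots x_m$ from $x$ to $y$ with $v^*_{x_ix_{i+1}}\ge v^*_{x_{i+1}x_i}$ for all $i<m$. An option $x$ is a path-top choice if $x\succeq y$ for every $y\ne x$; $T$ denotes the set of path-top choices. A set $X\subseteq A$ is a dominant set for $v^*$ if it is nonempty and $v^*_{xy}>v^*_{yx}$ for all $x\in X$ and $y\notin X$; it is a minimal dominant set if it is dominant and no proper subset of it is dominant. *)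

(* Defs.v *)
From HB Require Import structures.
From mathcomp Require Import all_boot all_order all_algebra.
Set Implicit Arguments. Unset Strict Implicit. Unset Printing Implicit Defensive.
Import Order.TTheory GRing.Theory Num.Theory.
Local Open Scope ring_scope.

Section Llull.
Variables (R : realFieldType) (A : finType).

Definition llull (v : A -> A -> R) : Prop :=
  forall x y : A, x != y -> [/\ 0 <= v x y, v x y <= 1 & v x y + v y x <= 1].

Definition path_min (v : A -> A -> R) (s : seq A) : R :=
  \big[Num.min/1]_(e <- zip s (behead s)) v e.1 e.2.

(* v*_{xy}: max over simple paths x = x_0 ... x_m = y, m >= 1, pairwise
   distinct vertices; a path with m edges is an (m.+1)-tuple, m = k.+1. *)
Definition vstar (v : A -> A -> R) (x y : A) : R :=
  \big[Num.max/0]_(k < #|A|)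
     \big[Num.max/0]_(t : k.+2.-tuple A |
         [&& uniq t, thead t == x & last x t == y]) path_min v t.

Definition base_rel (v : A -> A -> R) : rel A :=
  fun x y => (x != y) && (vstar v y x <= vstar v x y).

(* ranking relation: transitive closure (paths with m >= 1 steps) *)
Definition succeq (v : A -> A -> R) (x y : A) : bool :=
  [exists z, base_rel v x z && connect (base_rel v) z y].

Definition path_top (v : A -> A -> R) : {set A} :=
  [set x | [forall y, (y != x) ==> succeq v x y]].

Definition dominant (v : A -> A -> R) (X : {set A}) : Prop :=
  X != set0 /\
  forall x y, x \in X -> y \notin X -> vstar v y x < vstar v x y.

Definition minimal_dominant (v : A -> A -> R) (X : {set A}) : Prop :=
  dominant v X /\ forall Y : {set A}, Y \proper X -> ~ dominant v Y.

End Llull.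

(* Main.v *)
Require Import Defs.
From HB Require Import structures.
From mathcomp Require Import all_boot all_order all_algebra.
Import Order.TTheory GRing.Theory Num.Theory.
Local Open Scope ring_scope.

Section Aux.
Variables (R : realFieldType) (A : finType) (v : A -> A -> R).

Lemma pred_closed {X : {set A}} {a b} :
  (forall x y, x \in X -> y \notin X -> vstar v y x < vstar v x y) ->
  base_rel v a b -> b \in X -> a \in X.
Proof.
move=> HX /andP[_ Hab] Hb; apply/negPn/negP=> Ha.
by have := HX _ _ Hb Ha; rewrite ltNge Hab.
Qed.

Lemma conn_closed {X : {set A}} {t y} :
  (forall x y, x \in X -> y \notin X -> vstar v y x < vstar v x y) ->
  connect (base_rel v) t y -> y \in X -> t \in X.
Proof.
move=> HX /connectP[p]; elim: p t => [|z p IH] t /=; first by move=> _ ->.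
by case/andP=> Htz Hp Hy Hy'; apply: (pred_closed HX Htz); apply: IH.
Qed.

Lemma succ_closed {X : {set A}} {t y} :
  (forall x y, x \in X -> y \notin X -> vstar v y x < vstar v x y) ->
  succeq v t y -> y \in X -> t \in X.
Proof.
move=> HX /existsP[z /andP[Htz Hzy]] Hy.
exact: (pred_closed HX Htz (conn_closed HX Hzy Hy)).
Qed.

Lemma succ_conn x y : succeq v x y -> connect (base_rel v) x y.
Proof.
by case/existsP=> z /andP[H1 H2]; apply: connect_trans (connect1 H1) H2.
Qed.

Lemma conn_succ x y : connect (base_rel v) x y -> x != y -> succeq v x y.
Proof.
case/connectP=> [[|z p]] /=; first by move=> _ ->; rewrite eqxx.
case/andP=> H1 H2 Hy _; apply/existsP; exists z; rewrite H1 /=.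
by apply/connectP; exists p.
Qed.

Lemma in_top x : (x \in path_top v) = [forall y, (y != x) ==> succeq v x y].
Proof. by rewrite inE. Qed.

Lemma top_dom : (0 < #|A|)%N -> dominant v (path_top v).
Proof.
move=> /card_gt0P[x0 _].
pose S x := [set z | connect (base_rel v) x z].
have top_ne : path_top v != set0.
  apply/set0Pn.
  case: (@arg_maxnP A x0 predT (fun x => #|S x|) isT) => x _ Hmax.
  exists x; rewrite in_top; apply/forallP=> y; apply/implyP=> Hyx.
  apply: contraT => /negP Hn.
  have Hxy : ~~ connect (base_rel v) x y.
    by apply/negP=> C; apply: Hn; apply: conn_succ C _; rewrite eq_sym.
  have Byx : base_rel v y x.
    rewrite /base_rel Hyx /=; case: (lerP (vstar v y x) (vstar v x y)) => H.
      by exfalso; apply: Hn; apply/existsP; exists y;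
        rewrite /base_rel eq_sym Hyx H connect0.
    exact: ltW.
  have : S x \proper S y.
    apply/properP; split.
      apply/subsetP=> z; rewrite !inE => Hz.
      exact: connect_trans (connect1 Byx) Hz.
    by exists y; rewrite !inE ?connect0 // (negbTE Hxy).
  move/proper_card=> Hlt; have Hle : (#|S y| <= #|S x|)%N by exact: (Hmax y isT).
  by rewrite ltnNge Hle in Hlt.
split=> // x y Hx Hy; rewrite ltNge; apply/negP=> Hle.
have Hxy : x != y by by apply/negP=> /eqP E; move: Hy; rewrite -E Hx.
have Byx : base_rel v y x by rewrite /base_rel eq_sym Hxy Hle.
move/negP: Hy; apply; rewrite in_top; apply/forallP=> z; apply/implyP=> Hzy.
case: (eqVneq z x) => [->|Hzx].
  by apply/existsP; exists x; rewrite Byx connect0.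
move: Hx; rewrite in_top => /forallP/(_ z); rewrite Hzx /= => Hxz.
by apply/existsP; exists x; rewrite Byx succ_conn.
Qed.

End Aux.

Theorem theorem2p2 (R : realFieldType) (A : finType) (v : A -> A -> R) :
  (2 <= #|A|)%N -> llull v ->
  [/\ dominant v (path_top v),
      (forall Y : {set A}, Y \proper path_top v -> ~ dominant v Y)
    & (forall X : {set A}, minimal_dominant v X -> X = path_top v)].
Proof.
move=> HA _.
have HT := @top_dom R A v (ltnW HA).
have sub : forall X : {set A}, dominant v X -> path_top v \subset X.
  move=> X [/set0Pn[x Hx] HX]; apply/subsetP=> t Ht.
  case: (eqVneq x t) => [<-//|Hxt].
  move: Ht; rewrite in_top => /forallP/(_ x); rewrite Hxt /= => Hs.
  exact: succ_closed HX Hs Hx.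
split=> //.
  move=> Y HY DY; move/properP: HY => [_ [t Ht Hn]].
  by move/subsetP: (sub _ DY) => /(_ t Ht); rewrite (negbTE Hn).
move=> X [DX Hmin].
case: (eqVproper (sub _ DX)) => [->//|P].
by exfalso; apply: (Hmin _ P HT).
Qed.
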